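(* Let $\varepsilon>0$, let $p_{m,n}=u(m\varepsilon)+iv(n\varepsilon)$ be a rectangular lattice and let $G$ be a CR-mapping on it. Define $Q_{m,n}=\frac{p_{m,n+1}-p_{m,n}}{p_{m,n}-p_{m-1,n}}\cdot\frac{G_{m,n}-G_{m-1,n}}{G_{m,n+1}-G_{m,n}}$ and let $F$ be defined by $Q=e^{\varepsilon F}$. Then, at every index $(m,n)$ where the quantities are defined, $$F_{m-1,n+1}-F_{m,n}=M\,(F_{m,n+1}-F_{m-1,n})+2i\varepsilon\,\Xi\,\frac{F_{m,n+1}+F_{m-1,n}}{2}+\varepsilon^2\mathcal R,$$ where, with $a=p_{m,n+1}-p_{m,n}$, $a'=p_{m,n+2}-p_{m,n+1}$, $b=p_{m,n}-p_{m-1,n}$, $b'=p_{m-1,n}-p_{m-2,n}$, $$M=-\frac{b\,b'-a\,a'}{(b'+a)(b+a')},\qquad \Xi=-\frac{b\,a-b'\,a'}{i\varepsilon\,(b'+a)(b+a')},$$ $$\mathcal R=\frac{1}{\varepsilon^3}\Big(\log\frac{a'e^{\varepsilon F_{m,n+1}}+b}{a'+b\,e^{\varepsilon F_{m,n+1}}}+\varepsilon\frac{b-a'}{b+a'}F_{m,n+1}-\log\frac{a\,e^{\varepsilon F_{m-1,n}}+b'}{a+b'e^{\varepsilon F_{m-1,n}}}-\varepsilon\frac{b'-a}{b'+a}F_{m-1,n}\Big).$$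
   Context: $u,v$ are real functions with positive derivatives (so the lattice $p_{m,n}=u(m\varepsilon)+iv(n\varepsilon)$ is a rectangular lattice in $\mathbb C$). The cross-ratio of distinct $q_1,\dots,q_4\in\mathbb C$ is $\mathrm{CR}(q_1,q_2,q_3,q_4)=\frac{(q_1-q_2)(q_3-q_4)}{(q_2-q_3)(q_4-q_1)}$. A CR-mapping $G$ on the lattice satisfies $\mathrm{CR}(G_{m-1,n},G_{m,n},G_{m,n+1},G_{m-1,n+1})=\mathrm{CR}(p_{m-1,n},p_{m,n},p_{m,n+1},p_{m-1,n+1})$ for all rectangles (with the $G$-values involved mutually distinct). In the identity, $F$ and $\log$ are taken with appropriate branches of the complex logarithm (the identity arises by taking the logarithm of a multiplicative identity for $Q$ and dividing by $\varepsilon$). *)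

(* Defs.v *)
From Stdlib Require Import Reals ZArith.
From Coquelicot Require Import Coquelicot.

Definition cexp (z : C) : C :=
  (exp (Re z) * cos (Im z), exp (Re z) * sin (Im z))%R.

Definition CR (q1 q2 q3 q4 : C) : C :=
  ((q1 - q2) * (q3 - q4) / ((q2 - q3) * (q4 - q1)))%C.

Definition lattice (u v : R -> R) (eps : R) (m n : Z) : C :=
  (u (IZR m * eps), v (IZR n * eps))%R.

Definition distinct4 (q1 q2 q3 q4 : C) : Prop :=
  q1 <> q2 /\ q1 <> q3 /\ q1 <> q4 /\ q2 <> q3 /\ q2 <> q4 /\ q3 <> q4.

Definition CR_mapping (p G : Z -> Z -> C) : Prop :=
  forall m n : Z,
    distinct4 (G (m-1)%Z n) (G m n) (G m (n+1)%Z) (G (m-1)%Z (n+1)%Z) /\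
    CR (G (m-1)%Z n) (G m n) (G m (n+1)%Z) (G (m-1)%Z (n+1)%Z)
    = CR (p (m-1)%Z n) (p m n) (p m (n+1)%Z) (p (m-1)%Z (n+1)%Z).

Definition Qf (p G : Z -> Z -> C) (m n : Z) : C :=
  ((p m (n+1)%Z - p m n) / (p m n - p (m-1)%Z n)
   * ((G m n - G (m-1)%Z n) / (G m (n+1)%Z - G m n)))%C.

(* Main.v *)
Require Import Defs.
From Stdlib Require Import Reals ZArith Lra Lia.
From Coquelicot Require Import Coquelicot.
Lemma Cinv0 : Cinv (RtoC 0) = RtoC 0.
Proof. unfold Cinv, RtoC; simpl. apply injective_projections; simpl; unfold Rdiv; ring. Qed.

Lemma cexp_plus (x y : C) : cexp (x + y)%C = (cexp x * cexp y)%C.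
Proof.
  destruct x as [x1 x2], y as [y1 y2]. unfold cexp, Cmult, Cplus; simpl.
  rewrite exp_plus, cos_plus, sin_plus.
  apply injective_projections; simpl; ring.
Qed.

Lemma cexp_nz (z : C) : cexp z <> RtoC 0.
Proof.
  destruct z as [x y]. unfold cexp; simpl. intro H.
  assert (H1 := f_equal fst H). assert (H2 := f_equal snd H). simpl in H1, H2.
  assert (He := exp_pos x).
  assert (cos y = 0) by (apply (Rmult_eq_reg_l (exp x)); lra).
  assert (sin y = 0) by (apply (Rmult_eq_reg_l (exp x)); lra).
  assert (Hs := sin2_cos2 y). unfold Rsqr in Hs. nra.
Qed.

Lemma clog (z : C) : z <> RtoC 0 -> exists L, cexp L = z.
Proof.
  destruct z as [x y]. intro Hz.
  assert (Hpos : 0 < x * x + y * y).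
  { destruct (Req_dec x 0), (Req_dec y 0); try nra.
    subst. exfalso. apply Hz. reflexivity. }
  set (r := sqrt (x * x + y * y)).
  assert (Hr : 0 < r) by (apply sqrt_lt_R0; lra).
  assert (Hr2 : r * r = x * x + y * y) by (apply sqrt_sqrt; lra).
  assert (Hb : -1 <= x / r <= 1).
  { split.
    - apply (Rmult_le_reg_r r); auto. unfold Rdiv. rewrite Rmult_assoc, Rinv_l by lra.
      nra.
    - apply (Rmult_le_reg_r r); auto. unfold Rdiv. rewrite Rmult_assoc, Rinv_l by lra.
      nra. }
  assert (Hs : sqrt (1 - (x / r) ^ 2) = Rabs y / r).
  { apply sqrt_lem_1.
    - assert ((x/r)^2 <= 1). { destruct Hb. nra. } lra.
    - apply Rmult_le_pos. apply Rabs_pos. left; apply Rinv_0_lt_compat; auto.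
    - assert (Ha : Rabs y * Rabs y = y * y).
      { rewrite <- Rabs_mult. apply Rabs_right. nra. }
      replace (Rabs y / r * (Rabs y / r)) with ((Rabs y * Rabs y) / (r * r)) by (field; lra).
      replace ((x/r)^2) with (x*x/(r*r)) by (field; lra). rewrite Ha, Hr2. field. lra. }
  destruct (Rle_dec 0 y) as [Hy|Hy].
  - exists (ln r, acos (x / r)). unfold cexp; simpl.
    rewrite exp_ln by auto. rewrite cos_acos, sin_acos by auto. unfold Rsqr. replace (x / r * (x / r)) with ((x/r)^2) by ring. rewrite Hs.
    rewrite Rabs_right by lra. apply injective_projections; simpl; field; lra.
  - exists (ln r, - acos (x / r)). unfold cexp; simpl.
    rewrite exp_ln by auto. rewrite cos_neg, sin_neg, cos_acos, sin_acos by auto. unfold Rsqr. replace (x / r * (x / r)) with ((x/r)^2) by ring. rewrite Hs.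
    rewrite Rabs_left by lra. apply injective_projections; simpl; field; lra.
Qed.
Section KeySec.
Local Open Scope C_scope.
Lemma key (a a' b b' A B W D P S T U E1 E2 : C)
  (ha : a <> 0) (ha' : a' <> 0) (hb : b <> 0) (hb' : b' <> 0)
  (hE1 : E1 <> 0) (hE2 : E2 <> 0)
  (hCD : W - D <> 0) (hDA : D - A <> 0) (hBC : B - W <> 0)
  (hUC : U - W <> 0) (hTD : T - D <> 0) (hUD : U - D <> 0)
  (hSP : S - P <> 0) (hDP : D - P <> 0) (hAP : A - P <> 0)
  (n1 : a' + b * E1 <> 0) (n2 : a' * E1 + b <> 0)
  (n3 : a + b' * E2 <> 0) (n4 : a * E2 + b' <> 0)
  (R1 : (A - B) * (W - D) / ((B - W) * (D - A)) = b * b / (a * a))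
  (R2 : (D - W) * (U - T) / ((W - U) * (T - D)) = b * b / (a' * a'))
  (R3 : (P - A) * (D - S) / ((A - D) * (S - P)) = b' * b' / (a * a))
  (HE1 : E1 = (a' / b) * ((W - D) / (U - W)))
  (HE2 : E2 = (a / b') * ((A - P) / (D - A))) :
  (a' / b') * ((D - S) / (T - D)) * ((a * E2 + b') / (a + b' * E2))
  = (a / b) * ((B - A) / (W - B)) * ((a' * E1 + b) / (a' + b * E1)).
Proof.
  assert (h0 : (B - A) / (W - B) = (b / a) * (b / a) * ((D - A) / (W - D))).
  { transitivity ((A - B) * (W - D) / ((B - W) * (D - A)) * ((D - A) / (W - D))).
    - field. repeat split; auto.
      intro H. apply hBC. replace (B - W) with (- (W - B)) by ring. rewrite H. ring.
    - rewrite R1. field. auto. }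
  assert (hr : (U - W) / (W - D) = a' / (b * E1)).
  { rewrite HE1. field. auto. }
  assert (hw : (U - T) / (T - D) = b / (a' * E1)).
  { transitivity ((D - W) * (U - T) / ((W - U) * (T - D)) * ((U - W) / (W - D))).
    - field. repeat split; auto.
      intro H. apply hUC. replace (U - W) with (- (W - U)) by ring. rewrite H. ring.
    - rewrite R2, hr. field. auto. }
  assert (hT : (T - D) / (W - D) = ((U - W) / (W - D) + 1) / ((U - T) / (T - D) + 1)).
  { field. repeat split; auto.
    replace ((U - T) + (T - D)) with (U - D) by ring. auto. }
  assert (hr' : (A - P) / (D - A) = b' * E2 / a).
  { rewrite HE2. field. auto. }
  assert (hw' : (D - S) / (S - P) = b' / (a * E2)).
  { transitivity ((P - A) * (D - S) / ((A - D) * (S - P)) / ((A - P) / (D - A))).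
    - field. repeat split; auto.
      intro H. apply hDA. replace (D - A) with (- (A - D)) by ring. rewrite H. ring.
    - rewrite R3, hr'. field. auto. }
  assert (hS : (D - S) / (D - A) = ((A - P) / (D - A) + 1) * ((D - S) / (S - P)) / ((D - S) / (S - P) + 1)).
  { field. repeat split; auto.
    replace ((D - S) + (S - P)) with (D - P) by ring. auto. }
  replace ((D - S) / (T - D)) with (((D - S) / (D - A)) * ((D - A) / (W - D)) / ((T - D) / (W - D)))
    by (field; auto).
  rewrite hS, hT, h0, hr, hw, hr', hw'.
  generalize ((D - A) / (W - D)). intro z.
  field. repeat split; auto.
  - rewrite Cplus_comm; auto.
  - rewrite Cplus_comm; auto.
Qed.
End KeySec.
Lemma lat_h u v e m1 m2 n1 n2 :
  (lattice u v e m1 n1 - lattice u v e m2 n1 = lattice u v e m1 n2 - lattice u v e m2 n2)%C.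
Proof. unfold lattice, Cminus, Cplus, Copp; simpl. apply injective_projections; simpl; ring. Qed.

Lemma lat_v u v e m1 m2 n1 n2 :
  (lattice u v e m1 n1 - lattice u v e m1 n2 = lattice u v e m2 n1 - lattice u v e m2 n2)%C.
Proof. unfold lattice, Cminus, Cplus, Copp; simpl. apply injective_projections; simpl; ring. Qed.

Lemma sub_nz (x y : C) : x <> y -> (x - y)%C <> RtoC 0.
Proof. intros H H0. apply H. replace x with ((x - y) + y)%C by ring. rewrite H0. ring. Qed.

Lemma div_nz (x y w : C) : (x / y * w)%C <> RtoC 0 -> x <> RtoC 0 /\ y <> RtoC 0.
Proof.
  intro H. split; intro H0; apply H; rewrite H0.
  - unfold Cdiv. ring.
  - unfold Cdiv. rewrite Cinv0. ring.
Qed.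

Lemma quot_nz (x y : C) : x <> RtoC 0 -> y <> RtoC 0 -> (x / y)%C <> RtoC 0.
Proof. intros Hx Hy H. apply Hx. replace x with ((x / y) * y)%C by (field; auto). rewrite H. ring. Qed.

Lemma crp (x y z : C) : x <> RtoC 0 ->
  ((- y) * y / ((- x) * x))%C = (y * y / (x * x))%C.
Proof. intro. field. auto. Qed.

Theorem theorem3p1
  (u v : R -> R)
  (Hu : forall x : R, ex_derive u x /\ (0 < Derive u x)%R)
  (Hv : forall x : R, ex_derive v x /\ (0 < Derive v x)%R)
  (eps : R) (Heps : (0 < eps)%R)
  (G F : Z -> Z -> C)
  (HG : CR_mapping (lattice u v eps) G)
  (HF : forall m n : Z,
      cexp (RtoC eps * F m n)%C = Qf (lattice u v eps) G m n)
  (m n : Z) :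
  let p := lattice u v eps in
  let a  := (p m (n+1)%Z - p m n)%C in
  let a' := (p m (n+2)%Z - p m (n+1)%Z)%C in
  let b  := (p m n - p (m-1)%Z n)%C in
  let b' := (p (m-1)%Z n - p (m-2)%Z n)%C in
  let E1 := cexp (RtoC eps * F m (n+1)%Z)%C in
  let E2 := cexp (RtoC eps * F (m-1)%Z n)%C in
  (b' + a)%C <> RtoC 0 ->
  (b + a')%C <> RtoC 0 ->
  (a' + b * E1)%C <> RtoC 0 ->
  (a' * E1 + b)%C <> RtoC 0 ->
  (a + b' * E2)%C <> RtoC 0 ->
  (a * E2 + b')%C <> RtoC 0 ->
  let M  := (- ((b * b' - a * a') / ((b' + a) * (b + a'))))%C in
  let Xi := (- ((b * a - b' * a') / (Ci * RtoC eps * ((b' + a) * (b + a')))))%C in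
  (* "appropriate branches of log": there exist logarithms L1, L2 of the two
     arguments for which the identity holds *)
  exists L1 L2 : C,
    cexp L1 = ((a' * E1 + b) / (a' + b * E1))%C /\
    cexp L2 = ((a * E2 + b') / (a + b' * E2))%C /\
    let Rem := (/ (RtoC eps * RtoC eps * RtoC eps) *
                (L1 + RtoC eps * ((b - a') / (b + a')) * F m (n+1)%Z
                 - L2 - RtoC eps * ((b' - a) / (b' + a)) * F (m-1)%Z n))%C in
    (F (m-1)%Z (n+1)%Z - F m n)%C =
    (M * (F m (n+1)%Z - F (m-1)%Z n)
     + RtoC 2 * Ci * RtoC eps * Xi * ((F m (n+1)%Z + F (m-1)%Z n) / RtoC 2)
     + RtoC eps * RtoC eps * Rem)%C.
Proof.
  intros p a a' b b' E1 E2 h1 h2 h3 h4 h5 h6 M Xi.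
  assert (Hmm : (m - 1 - 1 = m - 2)%Z) by lia.
  assert (Hnn : (n + 1 + 1 = n + 2)%Z) by lia.
  destruct (HG m n) as [D1 R1].
  destruct (HG m (n+1)%Z) as [D2 R2].
  destruct (HG (m-1)%Z n) as [D3 R3].
  rewrite Hnn in D2, R2. rewrite Hmm in D3, R3.
  assert (Q0 := HF m n). assert (Q1 := HF m (n+1)%Z).
  assert (Q2 := HF (m-1)%Z n). assert (Q3 := HF (m-1)%Z (n+1)%Z).
  unfold Qf in Q0, Q1, Q2, Q3.
  rewrite Hnn in Q1, Q3. rewrite Hmm in Q2, Q3.
  fold p in R1, R2, R3, Q0, Q1, Q2, Q3.
  assert (ea1 : (p (m-1)%Z (n+1)%Z - p (m-1)%Z n)%C = a) by apply lat_v.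
  assert (ea2 : (p (m-1)%Z (n+2)%Z - p (m-1)%Z (n+1)%Z)%C = a') by apply lat_v.
  assert (eb1 : (p m (n+1)%Z - p (m-1)%Z (n+1)%Z)%C = b) by apply lat_h.
  assert (eb2 : (p (m-1)%Z (n+1)%Z - p (m-2)%Z (n+1)%Z)%C = b') by apply lat_h.
  assert (eb3 : (p m (n+2)%Z - p (m-1)%Z (n+2)%Z)%C = b) by apply lat_h.
  rewrite ea2, eb2 in Q3. rewrite eb1 in Q1. rewrite ea1 in Q2.
  fold a a' b b' in Q0, Q1, Q2, Q3.
  fold E1 in Q1. fold E2 in Q2.

  assert (nQ0 := cexp_nz (RtoC eps * F m n)%C). rewrite Q0 in nQ0.
  assert (nQ3 := cexp_nz (RtoC eps * F (m-1)%Z (n+1)%Z)%C).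
  assert (nE1 := cexp_nz (RtoC eps * F m (n+1)%Z)%C). fold E1 in nE1.
  assert (nE2 := cexp_nz (RtoC eps * F (m-1)%Z n)%C). fold E2 in nE2.
  destruct (div_nz _ _ _ nQ0) as [ha hb].
  assert (nQ1 := nE1). rewrite Q1 in nQ1. destruct (div_nz _ _ _ nQ1) as [ha' _].
  assert (nQ2 := nE2). rewrite Q2 in nQ2. destruct (div_nz _ _ _ nQ2) as [_ hb'].
  assert (C1 : CR (p (m - 1)%Z n) (p m n) (p m (n + 1)%Z) (p (m - 1)%Z (n + 1)%Z) = (b * b / (a * a))%C).
  { unfold CR. replace (p (m - 1)%Z n - p m n)%C with (- b)%C by (unfold b; ring).
    rewrite eb1. replace (p m n - p m (n + 1)%Z)%C with (- a)%C by (unfold a; ring).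
    replace (p (m - 1)%Z (n + 1)%Z - p (m - 1)%Z n)%C with a by (symmetry; exact ea1).
    apply crp; auto. }
  assert (C2 : CR (p (m - 1)%Z (n + 1)%Z) (p m (n + 1)%Z) (p m (n + 2)%Z) (p (m - 1)%Z (n + 2)%Z) = (b * b / (a' * a'))%C).
  { unfold CR. replace (p (m - 1)%Z (n + 1)%Z - p m (n + 1)%Z)%C with (- b)%C by (rewrite <- eb1; ring).
    rewrite eb3. replace (p m (n + 1)%Z - p m (n + 2)%Z)%C with (- a')%C by (unfold a'; ring).
    rewrite ea2. apply crp; auto. }
  assert (C3 : CR (p (m - 2)%Z n) (p (m - 1)%Z n) (p (m - 1)%Z (n + 1)%Z) (p (m - 2)%Z (n + 1)%Z) = (b' * b' / (a * a))%C).
  { unfold CR. replace (p (m - 2)%Z n - p (m - 1)%Z n)%C with (- b')%C by (unfold b'; ring).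
    rewrite eb2. replace (p (m - 1)%Z n - p (m - 1)%Z (n + 1)%Z)%C with (- a)%C by (rewrite <- ea1; ring).
    replace (p (m - 2)%Z (n + 1)%Z - p (m - 2)%Z n)%C with a.
    2:{ rewrite <- ea1. apply lat_v. }
    apply crp; auto. }
  rewrite C1 in R1. rewrite C2 in R2. rewrite C3 in R3.
  unfold CR in R1, R2, R3.
  destruct D1 as (d1 & d2 & d3 & d4 & d5 & d6).
  destruct D2 as (e1 & e2 & e3 & e4 & e5 & e6).
  destruct D3 as (f1 & f2 & f3 & f4 & f5 & f6).
  assert (HK := key a a' b b' (G (m-1)%Z n) (G m n) (G m (n+1)%Z) (G (m-1)%Z (n+1)%Z)
     (G (m-2)%Z n) (G (m-2)%Z (n+1)%Z) (G (m-1)%Z (n+2)%Z) (G m (n+2)%Z) E1 E2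
     ha ha' hb hb' nE1 nE2).
  rewrite <- Q0, <- Q3 in HK.
  assert (X1nz : ((a' * E1 + b) / (a' + b * E1))%C <> RtoC 0) by (apply quot_nz; auto).
  destruct (clog _ X1nz) as [L1 HL1].
  exists L1, (L1 - RtoC eps * F (m-1)%Z (n+1)%Z + RtoC eps * F m n)%C.
  split; [exact HL1|split].
  - specialize (HK (sub_nz _ _ d6) (sub_nz _ _ (fun e => d3 (eq_sym e))) (sub_nz _ _ d4)
      (sub_nz _ _ (fun e => e4 (eq_sym e))) (sub_nz _ _ (fun e => e3 (eq_sym e)))
      (sub_nz _ _ (fun e => e2 (eq_sym e)))
      (sub_nz _ _ (fun e => f3 (eq_sym e))) (sub_nz _ _ (fun e => f2 (eq_sym e)))
      (sub_nz _ _ (fun e => f1 (eq_sym e))) h3 h4 h5 h6 R1 R2 R3 Q1 Q2).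
    set (c3 := cexp (RtoC eps * F (m - 1)%Z (n + 1)%Z)%C) in *.
    set (c0 := cexp (RtoC eps * F m n)%C) in *.
    assert (H : (cexp (L1 - RtoC eps * F (m - 1)%Z (n + 1)%Z + RtoC eps * F m n) * c3
                 = cexp L1 * c0)%C).
    { unfold c3, c0. rewrite <- !cexp_plus. f_equal. ring. }
    rewrite HL1 in H.
    replace (cexp (L1 - RtoC eps * F (m - 1)%Z (n + 1)%Z + RtoC eps * F m n))
      with (cexp (L1 - RtoC eps * F (m - 1)%Z (n + 1)%Z + RtoC eps * F m n) * c3 / c3)%C
      by (field; exact nQ3).
    rewrite H. rewrite Cmult_comm, <- HK. field. auto.
  - intro Rem. unfold Rem, M, Xi.
    assert (Heps0 : RtoC eps <> RtoC 0).
    { intro H. apply (f_equal fst) in H. simpl in H. lra. }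
    assert (Hci : Ci <> RtoC 0).
    { intro H. apply (f_equal snd) in H. simpl in H. lra. }
    assert (H2 : RtoC 2 <> RtoC 0).
    { intro H. apply (f_equal fst) in H. simpl in H. lra. }
    field. repeat split; auto.
Qed.
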